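(* Let $\mathcal{L}$ be a square lattice and $\alpha \in \mathcal{L}$. Then $|E_\alpha| \geq |\mathcal{L}| - |J(\mathcal{L})|$.
   Context: All lattices are finite distributive lattices. An element $x$ of $\mathcal{L}$ is join-irreducible if $x = y \vee z$ implies $x = y$ or $x = z$ (so the minimum of $\mathcal{L}$ is join-irreducible); $J(\mathcal{L})$ denotes the poset of join-irreducibles. $\mathcal{L}$ is a tree lattice if the Hasse diagram of $J(\mathcal{L})$ is a tree; its root is the minimum element. A square lattice is a tree lattice such that in the Hasse diagram of $J(\mathcal{L})$ every vertex other than the root has degree at most two. A diamond in $\mathcal{L}$ is a set $D = \{x, y, x \vee y, x \wedge y\}$ with $x, y \in \mathcal{L}$ non-comparable. For $\alpha \in \mathcal{L}$, $E_\alpha = \{(\alpha, \gamma) : \text{there is a diamond } D \text{ of } \mathcal{L} \text{ with } \alpha, \gamma \in D\}$. *)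

(* Defs.v *)
From mathcomp Require Import all_boot all_order.
Set Implicit Arguments. Unset Strict Implicit. Unset Printing Implicit Defensive.
Import Order.Theory.
Local Open Scope order_scope.

Section LatticeDefs.
Context {d : Order.disp_t} {L : finTBDistrLatticeType d}.

(* join-irreducible, as in the paper: x = y \/ z implies x = y or x = z
   (so the minimum is join-irreducible) *)
Definition join_irr (x : L) : bool :=
  [forall y : L, forall z : L, (x == y `|` z) ==> (x == y) || (x == z)].

Definition Jset : {set L} := [set x | join_irr x].

Definition Jcover (x y : L) : bool :=
  [&& x \in Jset, y \in Jset, x < y &
      ~~ [exists z : L, [&& z \in Jset, x < z & z < y]]].

Definition hasse_adj (x y : L) : bool := Jcover x y || Jcover y x.

Definition hasse_connected : Prop :=
  forall x y, x \in Jset -> y \in Jset -> connect hasse_adj x y.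

Definition hasse_acyclic : Prop :=
  forall s : seq L, uniq s -> 3 <= size s -> ~~ cycle hasse_adj s.

Definition tree_lattice : Prop := hasse_connected /\ hasse_acyclic.

(* root = minimum element (\bot) *)
Definition hasse_degree (x : L) : nat := #|[set y | hasse_adj x y]|.

Definition square_lattice : Prop :=
  tree_lattice /\ forall x, x \in Jset -> x != \bot -> hasse_degree x <= 2.

Definition in_diamond (x y z : L) : bool :=
  ~~ (x >=< y) && (z \in [:: x; y; x `|` y; x `&` y]).

Definition Eset (alpha : L) : {set L * L} :=
  [set p : L * L | (p.1 == alpha) &&
     [exists x : L, exists y : L, in_diamond x y p.1 && in_diamond x y p.2]].

End LatticeDefs.

(* Main.v *)
Require Import Defs.
From mathcomp Require Import all_boot all_order.
Set Implicit Arguments. Unset Strict Implicit. Unset Printing Implicit Defensive.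
Import Order.Theory.
Local Open Scope order_scope.

Lemma measure_ind (T : Type) (f : T -> nat) (P : T -> Prop) :
  (forall x, (forall y, (f y < f x)%N -> P y) -> P x) -> forall x, P x.
Proof.
move=> H x; have [n] := ubnP (f x); elim: n x => [//|n IH] x Hx.
apply: H => y Hy; apply: IH; exact: leq_trans Hy _.
Qed.

Lemma split_mem (T:eqType) (x:T) s : x \in s -> exists s1 s2, s = s1 ++ x :: s2.
Proof. by case/splitPr => s1 s2; exists s1, s2. Qed.

Lemma two_paths_cycle (T : eqType) (e : rel T) (esy : symmetric e) x a b s t :
  a != b -> path e x (a :: s) -> path e x (b :: t) ->
  uniq (x :: a :: s) -> uniq (x :: b :: t) -> last a s = last b t ->
  exists c : seq T, [/\ uniq c, 2 < size c & cycle e c].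
Proof.
move=> nab pS pT uS uT eql.
set S := a :: s in pS uS; set U := b :: t in pT uT.
have hasS : has (mem U) S.
  apply/hasP; exists (last a s); first exact: mem_last.
  rewrite eql; exact: mem_last.
set i := find (mem U) S.
have iS : (i < size S)%N by rewrite /i -has_find.
set w := nth x S i.
have wU : w \in U by have := nth_find x hasS.
set s1 := take i S; set rest := drop i.+1 S.
have defS : S = s1 ++ w :: rest by rewrite /s1 /rest -(drop_nth x iS) cat_take_drop.
have sz1 : size s1 = i by rewrite /s1 size_take iS.
have s1U : ~~ has (mem U) s1.
  apply/negP => H; have : i = find (mem U) S by [].
  rewrite defS find_cat H => E.
  have := has_find (mem U) s1; rewrite H => /esym Hl. by rewrite -E sz1 ltnn in Hl.
have [t1 [t2 defU]] := split_mem wU.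
have uU' : uniq (t1 ++ w :: t2) by rewrite -defU; case/andP: uT.
have uS' : uniq (s1 ++ w :: rest) by rewrite -defS; case/andP: uS.
have xS : x \notin s1 ++ w :: rest by rewrite -defS; case/andP: uS.
have xU : x \notin t1 ++ w :: t2 by rewrite -defU; case/andP: uT.
exists (x :: s1 ++ w :: rev t1); split.
- rewrite /= mem_cat in_cons mem_rev negb_or.
  move: xS xU; rewrite !mem_cat !in_cons !negb_or => /andP[-> /andP[-> _]] /andP[-> _] /=.
  rewrite cat_uniq /= mem_rev rev_uniq.
  move: uS' uU'; rewrite !cat_uniq /= => /and3P[-> _ _] /and3P[ut1 /norP[wt1 _] _].
  rewrite wt1 ut1 andbT /= andbT negb_or.
  have nU : forall y, y \in s1 -> y \notin U by apply/hasPn.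
  apply/andP; split.
    by apply/negP => /nU; rewrite wU.
  apply/hasPn => y; rewrite mem_rev => yt1.
  apply/negP => /nU; by rewrite defU mem_cat yt1.
- rewrite /= size_cat /= size_rev.
  case: s1 sz1 defS {s1U uS' xS} => [|y1 s1'] sz1 defS; last by rewrite /= !addnS.
  case: t1 defU {uU' xU} => [|y2 t1'] defU; last by rewrite /= !addnS.
  exfalso; rewrite /S /U /= in defS defU; case: defS => ha _; case: defU => hb _.
  by move: nab; rewrite ha hb eqxx.
- rewrite /= rcons_cat rcons_cons -cat_rcons cat_path.
  have p1 : path e x (rcons s1 w).
    move: pS; rewrite defS -cat_rcons cat_path => /andP[//].
  rewrite p1 last_rcons.
  have p2 : path e x (rcons t1 w).
    move: pT; rewrite defU -cat_rcons cat_path => /andP[//].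
  have := rev_path e x (rcons t1 w); rewrite last_rcons belast_rcons rev_cons => ->.
  by apply: sub_path p2 => u v; rewrite esy.
Qed.

Lemma ltn_addb a b c e : (a < b)%N -> (c < e)%N -> (a + c < b + e)%N.
Proof. move=> h1 h2; rewrite -addnS; exact: leq_add (ltnW h1) h2. Qed.

Section S.
Context {d : Order.disp_t} {L : finTBDistrLatticeType d}.
Implicit Types x y z j k l a b c p q r : L.

Definition mb x := #|[set z : L | z < x]|.
Definition mu x := #|[set z : L | x < z]|.

Lemma mb_lt x y : x < y -> (mb x < mb y)%N.
Proof.
move=> xy; apply: proper_card; apply/properP; split.
  by apply/subsetP => z; rewrite !inE => zx; exact: lt_trans zx xy.
by exists x; rewrite !inE ?ltxx.
Qed.

Lemma mu_lt x y : x < y -> (mu y < mu x)%N.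
Proof.
move=> xy; apply: proper_card; apply/properP; split.
  by apply/subsetP => z; rewrite !inE => zx; exact: lt_trans xy zx.
by exists y; rewrite !inE ?ltxx.
Qed.

Lemma bot_J : (\bot : L) \in Jset.
Proof.
rewrite inE; apply/forallP => y; apply/forallP => z; apply/implyP => /eqP H.
have : y <= \bot by rewrite H leUl.
by rewrite lex0 eq_sym => ->.
Qed.

Lemma notJ x : x \notin Jset -> exists y z, [/\ x = y `|` z, x != y & x != z].
Proof.
rewrite inE => /forallPn [y /forallPn [z]]; rewrite negb_imply negb_or => /andP[/eqP e /andP[h1 h2]].
by exists y, z.
Qed.

Lemma E_cover j k : j \in Jset -> k \in Jset -> k < j -> exists c, Jcover c j /\ k <= c.
Proof.
move=> jJ kJ kj.
suff H : forall c, c \in Jset -> k <= c -> c < j -> exists c', Jcover c' j /\ c <= c'.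
  by have [c' [h1 h2]] := H k kJ (lexx k) kj; exists c'.
elim/(@measure_ind _ mu) => c IH cJ kc cj.
have [ex|nex] := boolP [exists z : L, [&& z \in Jset, c < z & z < j]].
  have /existsP [z /and3P[zJ cz zj]] := ex.
  have [c' [h1 h2]] := IH z (mu_lt cz) zJ (le_trans kc (ltW cz)) zj.
  by exists c'; split => //; exact: le_trans (ltW cz) h2.
by exists c; split => //; rewrite /Jcover cJ jJ cj nex.
Qed.

Lemma desc_path x : x \in Jset ->
  exists s, path (fun u v => Jcover v u) x s /\ last x s = \bot.
Proof.
elim/(@measure_ind _ mb): x => x IH xJ.
have [->|xb] := eqVneq x \bot; first by exists [::].
have bx : \bot < x by rewrite lt_def xb le0x.
have [c [cx _]] := E_cover xJ bot_J bx.
have cJ : c \in Jset by case/and4P: cx.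
have ltcx : c < x by case/and4P: cx.
have [s [ps ls]] := IH c (mb_lt ltcx) cJ.
by exists (c :: s); rewrite /= cx ps.
Qed.


Lemma hasse_sym : symmetric (@hasse_adj d L).
Proof. by move=> x y; rewrite /hasse_adj orbC. Qed.

Lemma cover_lt a b : Jcover a b -> a < b.
Proof. by case/and4P. Qed.

Lemma desc_prop x s : path (fun u v => Jcover v u) x s ->
  path hasse_adj x s /\ uniq (x :: s).
Proof.
move=> p; split.
  by apply: sub_path p => u v h; rewrite /hasse_adj h orbT.
apply: (@sorted_uniq _ (fun u v => v < u)).
- by move=> u v w /= h1 h2; exact: lt_trans h2 h1.
- by move=> u /=; rewrite ltxx.
by apply: sub_path p => u v /cover_lt.
Qed.

Lemma U_cover a b j : @hasse_acyclic d L -> Jcover a j -> Jcover b j -> a = b.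
Proof.
move=> acyc ca cb; apply/eqP/negPn/negP => nab.
have aJ : a \in Jset by case/and4P: ca.
have bJ : b \in Jset by case/and4P: cb.
have [sa [pa la]] := desc_path aJ.
have [sb [pb lb]] := desc_path bJ.
have pa' : path (fun u v => Jcover v u) j (a :: sa) by rewrite /= ca.
have pb' : path (fun u v => Jcover v u) j (b :: sb) by rewrite /= cb.
have [ha ua] := desc_prop pa'.
have [hb ub] := desc_prop pb'.
have [c [uc sc cc]] := two_paths_cycle hasse_sym nab ha hb ua ub (etrans la (esym lb)).
by have := acyc c uc sc; rewrite cc.
Qed.

Lemma Up_cover j a b : @square_lattice d L -> j \in Jset -> j != \bot ->
  Jcover j a -> Jcover j b -> a = b.
Proof.
move=> [_ deg] jJ jb ja jb'; apply/eqP/negPn/negP => nab.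
have bj : \bot < j by rewrite lt_def jb le0x.
have [c [cj _]] := E_cover jJ bot_J bj.
have ltca : c < a := lt_trans (cover_lt cj) (cover_lt ja).
have ltcb : c < b := lt_trans (cover_lt cj) (cover_lt jb').
have sub : [set c; a; b] \subset [set y | hasse_adj j y].
  apply/subsetP => y; rewrite !inE /hasse_adj => /orP[/orP[/eqP->|/eqP->]|/eqP->].
  - by rewrite cj orbT.
  - by rewrite ja.
  - by rewrite jb'.
have := subset_leq_card sub; rewrite -/(hasse_degree j).
have -> : [set c; a; b] = c |: [set a; b] by apply/setP => y; rewrite !inE orbA.
rewrite cardsU1 cards2 !inE nab negb_or (lt_eqF ltca) (lt_eqF ltcb) /=.
by move=> h; have := leq_trans h (deg j jJ jb).
Qed.

Lemma cmpE x y : (x >=< y) = (x <= y) || (y <= x).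
Proof. by []. Qed.

Lemma cover_between c k z : Jcover c k -> z \in Jset -> c < z -> z < k -> False.
Proof.
case/and4P => _ _ _ /existsPn /(_ z); by move=> /negP H zJ cz zk; apply: H; rewrite zJ cz zk.
Qed.

Lemma coverJ c k : Jcover c k -> c \in Jset.
Proof. by case/and4P. Qed.

Lemma down_chain (sq : @square_lattice d L) j : j \in Jset ->
  forall k l, k \in Jset -> l \in Jset -> k <= j -> l <= j -> k >=< l.
Proof.
case: (sq) => [[_ acyc] _].
elim/(@measure_ind _ mb): j => j IH jJ k l kJ lJ kj lj.
have [ekj|nkj] := eqVneq k j; first by rewrite cmpE ekj lj orbT.
have [elj|nlj] := eqVneq l j; first by rewrite cmpE elj kj.
have ltk : k < j by rewrite lt_neqAle nkj kj.
have ltl : l < j by rewrite lt_neqAle nlj lj.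
have [c1 [c1j kc1]] := E_cover jJ kJ ltk.
have [c2 [c2j lc2]] := E_cover jJ lJ ltl.
have e := U_cover acyc c1j c2j; subst c2.
exact: (IH c1 (mb_lt (cover_lt c1j)) (coverJ c1j)).
Qed.

Lemma ne_bot_le j c : j != \bot -> j <= c -> c != \bot.
Proof. by move=> jb jc; apply: contraNneq jb => cb; rewrite -lex0 -cb. Qed.

Lemma up_chain (sq : @square_lattice d L) j : j \in Jset -> j != \bot ->
  forall k l, k \in Jset -> l \in Jset -> j <= k -> j <= l -> k >=< l.
Proof.
move=> jJ jb.
suff H : forall p : L * L, p.1 \in Jset -> p.2 \in Jset -> j <= p.1 -> j <= p.2 -> p.1 >=< p.2.
  by move=> k l; exact: (H (k, l)).
elim/(@measure_ind _ (fun p : L * L => mb p.1 + mb p.2)%N) => -[k l] IH /= kJ lJ jk jl.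
have [ekj|nkj] := eqVneq k j; first by rewrite cmpE ekj jl.
have [elj|nlj] := eqVneq l j; first by rewrite cmpE elj jk orbT.
have ltk : j < k by rewrite lt_neqAle eq_sym nkj jk.
have ltl : j < l by rewrite lt_neqAle eq_sym nlj jl.
have [c1 [c1k jc1]] := E_cover kJ jJ ltk.
have [c2 [c2l jc2]] := E_cover lJ jJ ltl.
have c1J := coverJ c1k; have c2J := coverJ c2l.
have lt1 := cover_lt c1k; have lt2 := cover_lt c2l.
have := IH (c1, c2) (ltn_addb (mb_lt lt1) (mb_lt lt2)) c1J c2J jc1 jc2.
move=> /comparable_ltgtP [h|h|h] /=.
- have := IH (k, c2) (ltac:(by rewrite /= ltn_add2l (mb_lt lt2))) kJ c2J jk jc2.
  move=> /comparable_leP [h2|h2] /=.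
    by rewrite cmpE (le_trans h2 (ltW lt2)).
  by case: (cover_between c1k c2J h h2).
- have := IH (c1, l) (ltac:(by rewrite /= ltn_add2r (mb_lt lt1))) c1J lJ jc1 jl.
  rewrite /= comparable_sym => /comparable_leP [h2|h2].
    by rewrite cmpE (le_trans h2 (ltW lt1)) orbT.
  by case: (cover_between c2l c1J h h2).
- move: h c2l => /= <- c2l. by rewrite (Up_cover sq c1J (ne_bot_le jb jc1) c1k c2l) cmpE lexx.
Qed.

Lemma cmp_trans (sq : @square_lattice d L) a b c : a \in Jset -> b \in Jset -> c \in Jset ->
  b != \bot -> a >=< b -> b >=< c -> a >=< c.
Proof.
move=> aJ bJ cJ bb; rewrite !cmpE => /orP[ab|ba] /orP[bc|cb].
- by rewrite (le_trans ab bc).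
- by rewrite -cmpE; exact: (down_chain sq bJ aJ cJ ab cb).
- by rewrite -cmpE; exact: (up_chain sq bJ bb aJ cJ ba bc).
- by rewrite (le_trans cb ba) orbT.
Qed.

Lemma joinJ x : x = \join_(k | (k \in Jset) && (k <= x)) k.
Proof.
apply/le_anti/andP; split; last by apply/joinsP => k /andP[].
elim/(@measure_ind _ mb): x => x IH.
have [xJ|xJ] := boolP (x \in Jset).
  by apply: joins_sup; rewrite xJ lexx.
have [y [z [exz nxy nxz]]] := notJ xJ.
have yx : y <= x by rewrite exz leUl.
have zx : z <= x by rewrite exz leUr.
have lty : y < x by rewrite lt_def nxy yx.
have ltz : z < x by rewrite lt_def nxz zx.
have mono : forall w, w <= x -> \join_(k | (k \in Jset) && (k <= w)) k <= \join_(k | (k \in Jset) && (k <= x)) k.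
  move=> w wx; apply/joinsP => k /andP[kJ kw]; apply: joins_sup; by rewrite kJ (le_trans kw wx).
rewrite {1}exz leUx; apply/andP; split.
  exact: le_trans (IH y (mb_lt lty)) (mono y yx).
exact: le_trans (IH z (mb_lt ltz)) (mono z zx).
Qed.

Lemma exists_nonbot x : x != \bot -> exists j, [/\ j \in Jset, j <= x & j != \bot].
Proof.
move=> xb.
have [/existsP [j /and3P[h1 h2 h3]]|H] := boolP [exists j, [&& j \in Jset, j <= x & j != \bot]].
  by exists j.
exfalso; move: xb; rewrite (joinJ x) big1 ?eqxx // => k /andP[kJ kx].
move/existsPn: H => /(_ k); rewrite kJ kx /= => /negPn/eqP //.
Qed.

Definition P1 j x := \join_(k | (k \in Jset) && (k <= x) && (k >=< j)) k.
Definition P2 j x := \join_(k | (k \in Jset) && (k <= x) && ~~ (k >=< j)) k.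

Lemma P_split j x : x = P1 j x `|` P2 j x.
Proof. by rewrite {1}(joinJ x) (bigID (fun k => k >=< j)). Qed.

Lemma P1_le j x : P1 j x <= x. Proof. by apply/joinsP => k /andP[/andP[]]. Qed.
Lemma P2_le j x : P2 j x <= x. Proof. by apply/joinsP => k /andP[/andP[]]. Qed.

Lemma P1_mono j x y : x <= y -> P1 j x <= P1 j y.
Proof.
move=> xy; apply/joinsP => k /andP[/andP[kJ kx] kj]; apply: joins_sup.
by rewrite kJ (le_trans kx xy) kj.
Qed.
Lemma P2_mono j x y : x <= y -> P2 j x <= P2 j y.
Proof.
move=> xy; apply/joinsP => k /andP[/andP[kJ kx] kj]; apply: joins_sup.
by rewrite kJ (le_trans kx xy) kj.
Qed.

Lemma j_le_P1 j x : j \in Jset -> j <= x -> j <= P1 j x.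
Proof. by move=> jJ jx; apply: joins_sup; rewrite jJ jx cmpE lexx. Qed.

Lemma meet_k (sq : @square_lattice d L) j k1 k2 : j \in Jset -> j != \bot ->
  k1 \in Jset -> k2 \in Jset -> k1 >=< j -> ~~ (k2 >=< j) -> k1 `&` k2 = \bot.
Proof.
move=> jJ jb k1J k2J c1 c2.
rewrite (joinJ (k1 `&` k2)) big1 // => l /andP[lJ].
rewrite lexI => /andP[l1 l2]; apply/eqP/negPn/negP => lb.
have k1b := ne_bot_le lb l1.
have k2b := ne_bot_le lb l2.
have lj : l >=< j by apply: (cmp_trans sq lJ _ jJ k1b _ c1) => //; rewrite cmpE l1.
have : j >=< k2 by apply: (cmp_trans sq jJ lJ k2J lb _ _); [rewrite comparable_sym|rewrite cmpE l2].
by rewrite comparable_sym (negbTE c2).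
Qed.

Lemma P_meet (sq : @square_lattice d L) j x y : j \in Jset -> j != \bot ->
  P1 j x `&` P2 j y = \bot.
Proof.
move=> jJ jb; rewrite /P1.
apply: (big_ind (fun z => z `&` P2 j y = \bot)).
- by rewrite meet0x.
- by move=> a b ha hb; rewrite meetUl ha hb joinxx.
move=> k1 /andP[/andP[k1J _] c1]; rewrite /P2.
apply: (big_ind (fun z => k1 `&` z = \bot)).
- by rewrite meetx0.
- by move=> a b ha hb; rewrite meetUr ha hb joinxx.
move=> k2 /andP[/andP[k2J _] c2]; exact: (meet_k sq jJ jb k1J k2J c1 c2).
Qed.

Lemma P1_J (sq : @square_lattice d L) j x : j \in Jset -> j != \bot -> P1 j x \in Jset.
Proof.
move=> jJ jb.
suff : (P1 j x == \bot) || [exists k, [&& k \in Jset, k >=< j & P1 j x == k]].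
  case/orP => [/eqP->|/existsP [k /and3P[kJ _ /eqP->]]] //; exact: bot_J.
rewrite /P1; apply: (big_ind (fun z => (z == \bot) || [exists k, [&& k \in Jset, k >=< j & z == k]])).
- by rewrite eqxx.
- move=> a b /orP[/eqP->|ha] /orP[/eqP->|hb].
  + by rewrite joinxx eqxx.
  + by rewrite join0x hb orbT.
  + by rewrite joinx0 ha orbT.
  + move/existsP: ha => [ka /and3P[kaJ ca /eqP->]].
    move/existsP: hb => [kb /and3P[kbJ cb /eqP->]].
    apply/orP; right.
    have [kab|kab] := boolP (ka == \bot).
      by rewrite (eqP kab) join0x; apply/existsP; exists kb; rewrite kbJ cb eqxx.
    have : ka >=< kb by apply: (cmp_trans sq kaJ jJ kbJ jb) => //; rewrite comparable_sym.
    move=> /comparable_leP [h|h].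
      by rewrite (join_r h); apply/existsP; exists kb; rewrite kbJ cb eqxx.
    by rewrite (join_l (ltW h)); apply/existsP; exists ka; rewrite kaJ ca eqxx.
move=> k /andP[/andP[kJ _] c]; apply/orP; right; apply/existsP; exists k.
by rewrite kJ c eqxx.
Qed.


Lemma below_part (p1 p2 r : L) : r `&` p1 = \bot -> r <= p1 `|` p2 -> r <= p2.
Proof.
move=> h rp; have : r = r `&` (p1 `|` p2) by rewrite (meet_l rp).
by rewrite meetUr h join0x => ->; rewrite leIr.
Qed.

Lemma diam_lt (p q p1 p2 q1 q2 : L) : p < q -> p = p1 `|` p2 -> q = q1 `|` q2 ->
  p1 <= q1 -> p2 <= q2 -> p1 `&` q2 = \bot -> q1 `&` p2 = \bot -> q1 `&` q2 = \bot ->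
  (p1 != \bot) || (q1 != \bot) -> (p2 != \bot) || (q2 != \bot) ->
  exists x y, in_diamond x y p && in_diamond x y q.
Proof.
move=> pq ep eqq h1 h2 m1 m2 m3 nb1 nb2.
have [pneq pleq] : p != q /\ p <= q by move: pq; rewrite lt_neqAle => /andP[].
set v := p1 `|` q2; set w := q1 `|` p2.
have vw_join : v `|` w = q.
  apply/le_anti/andP; split.
    rewrite /v /w eqq !leUx leUr leUl /=.
    by rewrite (le_trans h1 (leUl _ _)) (le_trans h2 (leUr _ _)).
  rewrite /v /w eqq leUx; apply/andP; split.
    apply: le_trans (leUr _ _); exact: leUl.
  apply: le_trans (leUl _ _); exact: leUr.
have vw_meet : v `&` w = p.
  apply/le_anti/andP; split.
    rewrite /v meetUl leUx; apply/andP; split.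
      apply: le_trans (leIl _ _) _; rewrite ep; exact: leUl.
    rewrite /w meetUr leUx [q2 `&` q1]meetC m3 le0x /=.
    apply: le_trans (leIr _ _) _; rewrite ep; exact: leUr.
  rewrite /v /w lexI ep !leUx leUl leUr /=.
  rewrite andbT; apply/andP; split.
    apply: le_trans h2 _; exact: leUr.
  apply: le_trans h1 _; exact: leUl.
have [c|nc] := boolP (v >=< w); last first.
  exists v, w; rewrite /in_diamond nc /= !inE -vw_meet -vw_join !eqxx !orbT //.
move: c => /comparable_leP [vlw|wlv].
- have ev : v = p by rewrite -vw_meet (meet_l vlw).
  have q2p : q2 <= p by rewrite -ev leUr.
  have q2p2 : q2 <= p2 by apply: (below_part (p1:=p1)); [rewrite meetC|rewrite -ep].
  have e2 : p2 = q2 by apply/le_anti; rewrite h2 q2p2.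
  have pq1 : p `|` q1 = q.
    by rewrite ep eqq e2 joinAC (join_r h1).
  have nq1 : ~~ (p >=< q1).
    rewrite cmpE negb_or; apply/andP; split; apply/negP => H.
    - have : p2 <= q1 by rewrite (le_trans _ H) // ep leUr.
      move=> p2q1; have : p2 = \bot by apply/eqP; rewrite -lex0 -m2 lexI p2q1 lexx.
      by move=> pb; move: nb2; rewrite -e2 pb eqxx.
    - by move: pneq; rewrite -pq1 (join_l H) eqxx.
  by exists p, q1; rewrite /in_diamond nq1 /= !inE pq1 !eqxx !orbT.
- have ew : w = p by rewrite -vw_meet (meet_r (ltW wlv)).
  have q1p : q1 <= p by rewrite -ew leUl.
  have q1p1 : q1 <= p1 by apply: (below_part (p1:=p2)); [rewrite m2|rewrite joinC -ep].
  have e1 : p1 = q1 by apply/le_anti; rewrite h1 q1p1.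
  have pq2 : p `|` q2 = q.
    by rewrite ep eqq e1 -joinA (join_r h2).
  have nq2 : ~~ (p >=< q2).
    rewrite cmpE negb_or; apply/andP; split; apply/negP => H.
    - have : p1 <= q2 by rewrite (le_trans _ H) // ep leUl.
      move=> p1q2; have : p1 = \bot by apply/eqP; rewrite -lex0 -m1 lexI p1q2 lexx.
      by move=> pb; move: nb1; rewrite -e1 pb eqxx.
    - by move: pneq; rewrite -pq2 (join_l H) eqxx.
  by exists p, q2; rewrite /in_diamond nq2 /= !inE pq2 !eqxx !orbT.
Qed.

Lemma gamma_in (sq : @square_lattice d L) alpha gamma : gamma \notin Jset ->
  exists x y, in_diamond x y alpha && in_diamond x y gamma.
Proof.
move=> gJ.
have gb : gamma != \bot by apply: contraNneq gJ => ->; exact: bot_J.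
have [j [jJ jg jb]] := exists_nonbot gb.
have eg := P_split j gamma.
have g1b : P1 j gamma != \bot := ne_bot_le jb (j_le_P1 jJ jg).
have g2b : P2 j gamma != \bot.
  apply: contraNneq gJ => e; rewrite eg e joinx0; exact: P1_J.
have mg := P_meet sq gamma gamma jJ jb.
have [c|nc] := boolP (alpha >=< gamma); last first.
  by exists alpha, gamma; rewrite /in_diamond nc /= !inE !eqxx !orbT.
move: c => /comparable_ltgtP [h|h|h].
- apply: (diam_lt h (P_split j alpha) eg (P1_mono j (ltW h)) (P2_mono j (ltW h)));
    rewrite ?P_meet ?g1b ?g2b ?orbT //.
- have [x [y H]] := diam_lt h eg (P_split j alpha) (P1_mono j (ltW h)) (P2_mono j (ltW h))
    (P_meet sq _ _ jJ jb) (P_meet sq _ _ jJ jb) (P_meet sq _ _ jJ jb) (introT orP (or_introl g1b))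
    (introT orP (or_introl g2b)).
  by exists x, y; rewrite andbC.
- have nc : ~~ (P1 j gamma >=< P2 j gamma).
    rewrite cmpE negb_or; apply/andP; split; apply/negP => H.
      by move: g1b; rewrite -mg (meet_l H) eqxx.
    by move: g2b; rewrite -mg (meet_r H) eqxx.
  by exists (P1 j gamma), (P2 j gamma); rewrite /in_diamond nc /= !inE h -eg !eqxx !orbT.
Qed.
End S.

Local Close Scope order_scope.

Theorem theorem2 (d : Order.disp_t) (L : finTBDistrLatticeType d) (alpha : L) :
  @square_lattice d L ->
  #|{: L}| - #|@Jset d L| <= #|Eset alpha|.
Proof.
move=> sq.
have -> : #|{: L}| - #|@Jset d L| = #|~: (@Jset d L)| by rewrite [#|~: _|]cardsCs setCK.
have -> : #|~: (@Jset d L)| = #|[set (alpha, g) | g in ~: (@Jset d L)]|.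
  by rewrite card_imset // => a b [].
apply: subset_leq_card; apply/subsetP => p /imsetP [g]; rewrite inE => gJ ->.
have [x [y /andP[h1 h2]]] := gamma_in sq alpha gJ.
rewrite inE /= eqxx /=; apply/existsP; exists x; apply/existsP; exists y.
by rewrite h1 h2.
Qed.
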